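(* Let $p$ be an odd prime and let $x$ be an indeterminate. Then $$\sum_{k=0}^{p-1}\frac{\binom{2k}k^2}{16^k}\big(x^k-(-1)^{\frac{p-1}2}(1-x)^k\big)\equiv\sum_{k=0}^{\frac{p-1}2}\frac{\binom{2k}k^2}{16^k}\big(x^k-(-1)^{\frac{p-1}2}(1-x)^k\big)\equiv 0\pmod{p^2}.$$
   Context: The polynomials involved have rational coefficients whose denominators are prime to $p$; a congruence between such polynomials modulo $p^2$ means that every coefficient of their difference is a rational number whose numerator (in lowest terms) is divisible by $p^2$. *)

(* Defs.v *)
From HB Require Import structures.
From mathcomp Require Import all_boot all_order all_algebra.
Set Implicit Arguments. Unset Strict Implicit. Unset Printing Implicit Defensive.
Import Order.TTheory GRing.Theory Num.Theory.
Local Open Scope ring_scope.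

Definition poly_congr (m : nat) (P Q : {poly rat}) : Prop :=
  forall i : nat, (m%:Z %| numq ((P - Q)`_i))%Z.

Definition term2p1 (p k : nat) : {poly rat} :=
  ((('C(k.*2, k) ^ 2)%:R / 16%:R ^+ k) : rat)%:P *
  ('X^k - ((-1) ^+ (p.-1 %/ 2)) *: (1 - 'X) ^+ k).

(* Main.v *)
Require Import Defs.
From HB Require Import structures.
From mathcomp Require Import all_boot all_order all_algebra.
From mathcomp Require Import ring lra zify.
Import Order.TTheory GRing.Theory Num.Theory.
Local Open Scope ring_scope.

Definition Dp (p : nat) (q : rat) :=
  exists v : nat, coprime v p /\ exists u : int, q * v%:R = (p ^ 2)%:R * u%:~R.

Lemma Dp0 p : Dp p 0.
Proof. by exists 1%N; split; [exact: coprime1n| exists 0; rewrite !mul0r mulr0]. Qed.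

Lemma DpD p x y : Dp p x -> Dp p y -> Dp p (x + y).
Proof.
move=> [v [cv [u hu]]] [w [cw [t ht]]].
exists (v * w)%N; split; first by rewrite coprimeMl cv cw.
exists (u * w%:Z + t * v%:Z); rewrite natrM mulrDl.
have -> : x * (v%:R * w%:R) = (x * v%:R) * w%:R by ring.
have -> : y * (v%:R * w%:R) = (y * w%:R) * v%:R by ring.
rewrite hu ht intrD !intrM !pmulrn; ring.
Qed.

Lemma DpMz p x z : Dp p x -> Dp p (x * z%:~R).
Proof.
move=> [v [cv [u hu]]]; exists v; split => //; exists (u * z).
by rewrite mulrAC hu intrM mulrA.
Qed.

Lemma DpN p x : Dp p x -> Dp p (- x).
Proof. by move=> h; have := @DpMz p x (-1) h; rewrite mulrN1. Qed.

Lemma DpB p x y : Dp p x -> Dp p y -> Dp p (x - y).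
Proof. by move=> hx hy; apply: DpD => //; apply: DpN. Qed.

Lemma Dp_sum p (I : Type) (r : seq I) (P : pred I) (F : I -> rat) :
  (forall i, P i -> Dp p (F i)) -> Dp p (\sum_(i <- r | P i) F i).
Proof. move=> h; apply: (big_ind (Dp p)) => //; [exact: Dp0| exact: DpD]. Qed.

Lemma Dp_numq p q : Dp p q -> ((p ^ 2)%N%:Z %| numq q)%Z.
Proof.
move=> [v [cv [u hu]]].
have e : numq q * v%:Z = (p ^ 2)%N%:Z * (u * denq q).
  apply: (@intr_inj rat); rewrite !intrM numqE -!pmulrn.
  by rewrite mulrAC hu; ring.
have cz : coprimez (p ^ 2)%N%:Z v%:Z by rewrite coprimezE /= coprime_sym coprimeXr.
by rewrite -(Gauss_dvdzl _ cz) e dvdz_mulr.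
Qed.

Lemma fact_double k : (k.*2)`! = (k`! * 2 ^ k * \prod_(j < k) j.*2.+1)%N.
Proof.
elim: k => [|k IH]; first by rewrite big_ord0.
rewrite doubleS !factS IH big_ord_recr /= expnS.
have -> : k.*2.+2 = (k.+1 * 2)%N by rewrite muln2.
ring.
Qed.

Lemma bin_double k : ('C(k.*2, k) * k`! = 2 ^ k * \prod_(j < k) j.*2.+1)%N.
Proof.
have h := bin_fact (leq_addl k k); rewrite addnK addnn fact_double in h.
apply/eqP; rewrite -(eqn_pmul2r (fact_gt0 k)); apply/eqP.
rewrite -mulnA h. ring.
Qed.

Lemma coprime_fact p k : prime p -> (k < p)%N -> coprime k`! p.
Proof.
move=> pp; elim: k => [|k IH] lt; first by rewrite coprime1n.
rewrite factS coprimeMl IH ?(ltnW lt) // andbT coprime_sym prime_coprime //.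
apply/negP => /dvdn_leq; move/(_ isT); lia.
Qed.

Lemma coprime_v p k : prime p -> odd p -> (k < p)%N -> coprime (4 ^ k * k`! ^ 2) p.
Proof.
move=> pp op lt; rewrite coprimeMl (coprimeXl 2 (@coprime_fact p k pp lt)) andbT.
have -> : 4%N = (2 ^ 2)%N by []. rewrite -expnM coprimeXl //.
rewrite coprime_sym prime_coprime //; apply/negP => /dvdn_leq; move/(_ isT) => h.
have : p = 2%N. have := prime_gt1 pp; lia.
by move=> e; rewrite e in op.
Qed.

Lemma prod_shift_dvd (m : int) k (c : nat -> int) :
  (m %| \prod_(j < k) c j - \prod_(j < k) (c j - m))%Z.
Proof.
elim: k => [|k IH]; first by rewrite !big_ord0 subrr dvdz0.
rewrite !big_ord_recr /=.
have -> : \prod_(i < k) c i * c k - \prod_(i < k) (c i - m) * (c k - m) =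
  (\prod_(i < k) c i - \prod_(i < k) (c i - m)) * c k + m * \prod_(i < k) (c i - m) by ring.
by rewrite rpredD //; [apply: dvdz_mulr IH | apply: dvdz_mulr (dvdzz m)].
Qed.

Lemma Grec n k :
  ('C(n, k.+1) * 'C(n + k.+1, n) * 4 ^ k.+1 * k.+1`! ^ 2 =
   'C(n, k) * 'C(n + k, n) * 4 ^ k * k`! ^ 2 * (4 * (n - k) * (n + k.+1)))%N.
Proof.
have h1 := mul_bin_left n k.
have h2 : ((n + k.+1) * 'C(n + k, n) = k.+1 * 'C(n + k.+1, n))%N.
  by have := mul_bin_down (n + k.+1) n; rewrite addKn => <-; rewrite addnS.
have -> : ('C(n, k.+1) * 'C(n + k.+1, n) * 4 ^ k.+1 * k.+1`! ^ 2 =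
   (k.+1 * 'C(n, k.+1)) * (k.+1 * 'C(n + k.+1, n)) * 4 ^ k.+1 * k`! ^ 2)%N
  by rewrite factS; ring.
rewrite h1 -h2 expnS; ring.
Qed.

Lemma Gint n k : (k <= n)%N ->
  (-1) ^+ k * ('C(n, k) * 'C(n + k, n) * 4 ^ k * k`! ^ 2)%N%:Z =
  \prod_(j < k) (((j.*2.+1) ^ 2)%N%:Z - ((n.*2.+1) ^ 2)%N%:Z).
Proof.
elim: k => [|k IH] lt; first by rewrite big_ord0 bin0 addn0 binn.
rewrite big_ord_recr /= -IH ?(ltnW lt) // Grec exprS.
rewrite !PoszM -subzn ?(ltnW lt) //.
have e : forall x : nat, (x.*2.+1)%:Z = 2 * x%:Z + 1.
  by move=> x; rewrite -addn1 -muln2 PoszD PoszM mulrC.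
rewrite !e PoszD -addn1 PoszD; ring.
Qed.

Lemma coef1X n k : ((1 - 'X : {poly rat}) ^+ n)`_k = (-1) ^+ k * ('C(n, k))%:R.
Proof.
elim: n k => [|n IH] k.
  by rewrite expr0 coef1; case: k => [|k] //=; rewrite ?mul1r ?mulr0.
rewrite exprS mulrBl mul1r coefB coefXM.
case: k => [|k] /=; first by rewrite subr0 IH !bin0.
by rewrite !IH binS natrD exprS; ring.
Qed.

Definition Bp n : {poly rat} := ('X^n * (1 - 'X) ^+ n)^`N(n).

Lemma coefBp n k : (Bp n)`_k = (-1) ^+ k * ('C(n, k) * 'C(n + k, n))%:R.
Proof.
rewrite /Bp coef_nderivn coefXnM ltnNge leq_addr /= addKn coef1X.
rewrite natrM mulrA; exact: (esym (mulr_natr _ _)).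
Qed.

Lemma comp1X_derivn (q : {poly rat}) m :
  (q \Po (1 - 'X))^`(m) = (-1) ^+ m *: (q^`(m) \Po (1 - 'X)).
Proof.
elim: m => [|m IH]; first by rewrite !derivn0 expr0 scale1r.
rewrite derivnS IH derivZ deriv_comp derivB (derivC 1) derivX sub0r -derivnS.
by rewrite mulrN1 scalerN -scaleN1r scalerA exprS mulrC.
Qed.

Lemma sign_sq n : ((-1) ^+ n * (-1) ^+ n : rat) = 1.
Proof. by rewrite -exprD addnn -mul2n exprM expr2 mulrNN mulr1 expr1n. Qed.

Lemma Bp_sym n : Bp n \Po (1 - 'X) = (-1) ^+ n *: Bp n.
Proof.
set R : {poly rat} := 'X^n * (1 - 'X) ^+ n.
have hR : R \Po (1 - 'X) = R.
  rewrite /R comp_polyM !rmorphXn /= comp_polyX comp_polyB comp_polyC comp_polyX.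
  by rewrite polyC1 opprB addrCA subrr addr0 mulrC.
have h := comp1X_derivn R n; rewrite hR !nderivn_def in h.
have nz : (n`!%:R : rat) != 0 by rewrite pnatr_eq0 -lt0n fact_gt0.
have h' : (R^`N(n) *+ n`! \Po (1 - 'X)) = (Bp n \Po (1-'X)) *+ n`!.
  by rewrite -!scaler_nat comp_polyZ.
rewrite h' in h.
apply: (scalerI nz); rewrite !scaler_nat scalerMnr.
rewrite [Bp n *+ _]h scalerA sign_sq scale1r.
by [].
Qed.


Definition ak (k : nat) : rat := ('C(k.*2, k) ^ 2)%N%:R / 16%:R ^+ k.

Lemma a_mul k : ak k * (4 ^ k * k`! ^ 2)%N%:R = (\prod_(j < k) (j.*2.+1) ^ 2)%N%:R.
Proof.
have e : ('C(k.*2, k)%:R * k`!%:R : rat) = 2%:R ^+ k * (\prod_(j < k) j.*2.+1)%N%:R.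
  by rewrite -natrM bin_double natrM natrX.
have hp : (\prod_(j < k) (j.*2.+1) ^ 2 = (\prod_(j < k) j.*2.+1) ^ 2)%N.
  by rewrite -mulnn -big_split; apply: eq_bigr => j _; rewrite -mulnn.
rewrite hp /ak !natrM !natrX.
have h16 : (16%:R : rat) = 4%:R * 4%:R by rewrite -natrM.
have h4 : (4%:R : rat) = 2%:R ^+ 2 by rewrite -natrX.
have nz : (4%:R ^+ k : rat) != 0 by rewrite expf_neq0 // pnatr_eq0.
transitivity (('C(k.*2, k)%:R * k`!%:R) ^+ 2 * (4%:R ^+ k / 16%:R ^+ k) : rat).
  by rewrite exprMn; field; rewrite h16 exprMn mulf_neq0.
rewrite e h16 exprMn exprMn -exprM mulnC exprM -h4; field; rewrite expf_neq0 // pnatr_eq0.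
Qed.

Lemma p_half p : odd p -> p = (p.-1 %/ 2).*2.+1.
Proof.
move=> op; have pe := odd_double_half p; rewrite op in pe.
rewrite -{1 2}pe /= -muln2 mulnK //; lia.
Qed.

Lemma ab_Dp p k : prime p -> odd p -> (k <= p.-1 %/ 2)%N ->
  Dp p (ak k - (Bp (p.-1 %/ 2))`_k).
Proof.
move=> pp op lk; have pn := p_half p op; set n := (p.-1 %/ 2)%N in pn lk *.
have lkp : (k < p)%N by rewrite pn; lia.
exists (4 ^ k * k`! ^ 2)%N; split; first exact: coprime_v.
have hb : (Bp n)`_k * (4 ^ k * k`! ^ 2)%N%:R =
   (\prod_(j < k) (((j.*2.+1) ^ 2)%N%:Z - ((n.*2.+1) ^ 2)%N%:Z))%:~R.
  rewrite coefBp -Gint // intrM rmorphXn rmorphN1 -mulrA -natrM; congr (_ * _).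
  by rewrite !mulnA.
have ha := a_mul k.
have hd := prod_shift_dvd ((p ^ 2)%N%:Z) k (fun j => ((j.*2.+1) ^ 2)%N%:Z).
case/dvdzP: hd => q hq; exists q.
rewrite mulrBl ha hb -pn.
have -> : ((\prod_(j < k) (j.*2.+1) ^ 2)%N%:R : rat) =
   (\prod_(j < k) ((j.*2.+1) ^ 2)%N%:Z)%:~R.
  by rewrite natr_prod rmorph_prod; apply: eq_bigr.
by rewrite -intrB hq intrM mulrC.
Qed.

Lemma a_Dp p k : prime p -> odd p -> (p.-1 %/ 2 < k)%N -> (k < p)%N -> Dp p (ak k).
Proof.
move=> pp op lk lkp; have pn := p_half p op.
have dC : (p %| 'C(k.*2, k))%N.
  have h := bin_fact (leq_addl k k); rewrite addnK addnn in h.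
  have : (p %| (k.*2)`!)%N by rewrite dvdn_fact // prime_gt0 //=; lia.
  by rewrite -h Gauss_dvdl // coprimeMr !(coprime_sym p) coprime_fact.
case/dvdnP: dC => c hc.
exists (16 ^ k)%N; split.
  have -> : 16%N = (2 ^ 4)%N by [].
  rewrite -expnM coprimeXl // coprime_sym prime_coprime //.
  apply/negP => /dvdn_leq; move/(_ isT) => h.
  have : p = 2%N by have := prime_gt1 pp; lia.
  by move=> e; rewrite e in op.
exists (c ^ 2)%N%:Z.
rewrite /ak hc !natrX -mulrA mulVf ?mulr1; last by rewrite expf_neq0 // pnatr_eq0.
by rewrite -pmulrn !natrX natrM exprMn mulrC.
Qed.

Lemma coefT (c : nat -> rat) m N n i :
 (\sum_(m <= k < N) (c k)%:P * ('X^k - (-1) ^+ n *: (1 - 'X) ^+ k))`_i =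
 \sum_(m <= k < N) c k * ((i == k)%:Z - (-1) ^+ n * (-1) ^+ i * ('C(k, i))%:Z)%:~R.
Proof.
rewrite coef_sum; apply: eq_bigr => k _.
rewrite coefCM coefB coefZ coefXn coef1X; congr (_ * _).
by rewrite intrB !intrM !rmorphXn rmorphN1 /= mulrA.
Qed.

Lemma comp_sum (F : nat -> {poly rat}) m N r :
  (\sum_(m <= k < N) F k) \Po r = \sum_(m <= k < N) (F k \Po r).
Proof. exact: (big_morph _ (fun p q => comp_polyD p q r) (comp_poly0 r)). Qed.

Lemma Tb_zero n :
  \sum_(0 <= k < n.+1) ((Bp n)`_k)%:P * ('X^k - (-1) ^+ n *: (1 - 'X) ^+ k) = 0.
Proof.
have hB : \sum_(0 <= k < n.+1) ((Bp n)`_k)%:P * 'X^k = Bp n.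
  apply/polyP => i; rewrite coef_sum.
  case: (ltnP i n.+1) => hi.
    rewrite (bigD1_seq i) ?mem_iota ?iota_uniq //= ?hi //.
    rewrite coefCM coefXn eqxx mulr1 big1_seq ?addr0 // => k /andP [nk _].
    by rewrite coefCM coefXn eq_sym (negbTE nk) mulr0.
  rewrite big1_seq; last first.
    move=> k /andP [_]; rewrite mem_iota => /andP [_ hk].
    rewrite coefCM coefXn; case: eqP => [e|]; last by rewrite mulr0.
    by move: hk; rewrite -e add0n ltnNge hi.
  by rewrite coefBp bin_small ?mul0n ?mulr0 //.
have hC : \sum_(0 <= k < n.+1) ((Bp n)`_k)%:P * (1 - 'X) ^+ k = Bp n \Po (1 - 'X).
  rewrite -{2}hB comp_sum; apply: eq_bigr => k _.
  by rewrite comp_polyM comp_polyC rmorphXn /= comp_polyX.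
rewrite (eq_bigr (fun k => ((Bp n)`_k)%:P * 'X^k -
   (-1) ^+ n *: (((Bp n)`_k)%:P * (1 - 'X) ^+ k))); last first.
  by move=> k _; rewrite mulrBr scalerAr.
by rewrite sumrB -scaler_sumr hB hC Bp_sym scalerA sign_sq scale1r subrr.
Qed.

Lemma Dp_sum_nat p m N (F : nat -> rat) :
  (forall k, (m <= k < N)%N -> Dp p (F k)) -> Dp p (\sum_(m <= k < N) F k).
Proof. by move=> h; rewrite big_nat_cond; apply: Dp_sum => k /andP [hk _]; apply: h. Qed.

Theorem theorem2p1 (p : nat) (hp : prime p) (hodd : odd p) :
  poly_congr (p ^ 2)
    (\sum_(0 <= k < p) term2p1 p k)
    (\sum_(0 <= k < (p.-1 %/ 2).+1) term2p1 p k)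
  /\
  poly_congr (p ^ 2) (\sum_(0 <= k < (p.-1 %/ 2).+1) term2p1 p k) 0.
Proof.
have pn := p_half p hodd.
split=> i; apply: Dp_numq.
  have hle : ((p.-1 %/ 2).+1 <= p)%N by rewrite {2}pn; lia.
  rewrite (big_cat_nat (leq0n _) hle) /=.
  have -> : forall x y : {poly rat}, x + y - x = y by move=> x y; rewrite addrC addKr.
  rewrite (coefT ak); apply: Dp_sum_nat => k /andP [h1 h2].
  by apply: DpMz; apply: a_Dp.
rewrite subr0.
set S := \sum_(0 <= k < _) term2p1 p k.
have -> : S = S - \sum_(0 <= k < (p.-1 %/ 2).+1) ((Bp (p.-1 %/ 2))`_k)%:P *
   ('X^k - (-1) ^+ (p.-1 %/ 2) *: (1 - 'X) ^+ k) by rewrite Tb_zero subr0.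
rewrite coefB /S.
rewrite (coefT ak) coefT -sumrB; apply: Dp_sum_nat => k /andP [h1 h2].
by rewrite -mulrBl; apply: DpMz; apply: ab_Dp.
Qed.
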